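(* Fix $\lambda_s>0$, $\lambda>0$ and $C>0$. For each $n\ge2$ let $\tilde n(n)$ be an integer with $0\le\tilde n(n)\le\min\{\binom n2, C\,n\log n\}$. Then there exist $C'>0$ and $N$ such that for all $n\ge N$ the average age $\Delta=\frac1n\sum_{i=1}^n\Delta_i$ of the greedy jammed network $G^{\mathrm{gr}}\big(n,\binom n2-\tilde n(n)\big)$ satisfies $\Delta\le C'\log n$.
   Context: Version-age model. A gossip network on a finite node set $\mathcal N$ is specified by source rates $\lambda_{0j}>0$ and gossip rates $\lambda_{ij}\ge 0$ ($i\neq j$; rate at which $i$ sends to $j$); $\lambda_s>0$ is the source's update rate. For nonempty $S\subseteq\mathcal N$ let $N(S)=\{i\in\mathcal N\setminus S:\ \sum_{j\in S}\lambda_{ij}>0\}$ and define $$\Delta_S=\frac{\lambda_s+\sum_{i\in N(S)}\big(\sum_{j\in S}\lambda_{ij}\big)\Delta_{S\cup\{i\}}}{\sum_{j\in S}\lambda_{0j}+\sum_{i\in N(S)}\sum_{j\in S}\lambda_{ij}}$$ (well defined by downward induction on $|S|$); $\Delta_i=\Delta_{\{i\}}$. Networks with uniform link rate: node set $\{1,\dots,n\}$, $\lambda_{0j}=\lambda/n$ for all $j$, and a set of links (unordered pairs of distinct nodes); for each link $\{a,b\}$, $\lambda_{ab}=\lambda_{ba}=\lambda/n$, and $\lambda_{ab}=0$ otherwise. The fully connected network has all $\binom n2$ pairs as links; $\tilde n$ jammers remove $\tilde n$ distinct links, leaving $\bar n=\binom n2-\tilde n$ links. Greedy configuration $G^{\mathrm{gr}}(n,\bar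 n)$ for $0\le\bar n\le\binom n2$: write uniquely $\bar n=\binom k2+c$ with $1\le k\le n$ and $0\le c\le k-1$; the links are all pairs $\{a,b\}$ with $1\le a<b\le k$, together with (if $c>0$) the pairs $\{j,k+1\}$ for $1\le j\le c$; there are no other links. *)

(* Defs.v *)
From HB Require Import structures.
From mathcomp Require Import all_boot all_order all_algebra.
From mathcomp Require Import all_classical all_reals exp.
Set Implicit Arguments. Unset Strict Implicit. Unset Printing Implicit Defensive.
Import Order.TTheory GRing.Theory Num.Theory.
Local Open Scope ring_scope.

Section VersionAge.
Variables (R : realType) (n : nat).
(* source update rate, source->node rates, gossip rates lam i j (i sends to j) *)
Variables (ls : R) (l0 : 'I_n -> R) (lam : 'I_n -> 'I_n -> R).

Definition rate_into (S : {set 'I_n}) (i : 'I_n) : R := \sum_(j in S) lam i j.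

Definition nbr (S : {set 'I_n}) : {set 'I_n} :=
  [set i | (i \notin S) && (0 < rate_into S i)].

(* Delta_S computed with fuel k; correct when k = n - #|S| (downward induction
   on |S|: every S :|: {i} with i \in N(S) has one more element). When S is the
   full set N(S) is empty, so the fuel-0 clause coincides with the general formula. *)
Fixpoint age_fuel (k : nat) (S : {set 'I_n}) : R :=
  match k with
  | 0 => ls / (\sum_(j in S) l0 j)
  | k.+1 => (ls + \sum_(i in nbr S) rate_into S i * age_fuel k (i |: S)) /
            (\sum_(j in S) l0 j + \sum_(i in nbr S) rate_into S i)
  end.

Definition age (S : {set 'I_n}) : R := age_fuel (n - #|S|) S.

Definition age1 (i : 'I_n) : R := age [set i].

Definition avg_age : R := n%:R^-1 * \sum_(i < n) age1 i.
End VersionAge.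

(* Greedy configuration G^gr(n, nbar): nbar = 'C(k,2) + c, 1 <= k <= n,
   0 <= c <= k-1.  k is the largest k <= n with 'C(k,2) <= nbar. *)
Definition greedy_k (n nbar : nat) : nat := \big[maxn/0%N]_(k < n.+1 | ('C(k, 2) <= nbar)%N) k.
Definition greedy_c (n nbar : nat) : nat := nbar - 'C(greedy_k n nbar, 2).

(* Nodes 1..n of the paper are 'I_n shifted by one: paper node a = i.+1.
   Paper links {a,b}, a<b: b <= k, or (b = k+1 and a <= c).
   0-indexed (a' = a-1, b' = b-1): b' < k, or (b' = k and a' < c). *)
Definition greedy_link (n nbar : nat) (i j : 'I_n) : bool :=
  let a := minn i j in let b := maxn i j in
  [&& (a < b)%N & ((b < greedy_k n nbar)%N || ((b == greedy_k n nbar) && (a < greedy_c n nbar)%N))].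
Arguments greedy_link : clear implicits.

Definition unif_l0 (R : realType) (n : nat) (l : R) : 'I_n -> R := fun _ => l / n%:R.
Definition unif_lam (R : realType) (n : nat) (l : R) (link : 'I_n -> 'I_n -> bool)
  : 'I_n -> 'I_n -> R := fun i j => if link i j then l / n%:R else 0.

Definition greedy_avg_age (R : realType) (ls l : R) (n nbar : nat) : R :=
  @avg_age R n ls (@unif_l0 R n l) (@unif_lam R n l (@greedy_link n nbar)).

(* Main.v *)
Require Import Defs.
From HB Require Import structures.
From mathcomp Require Import all_boot all_order all_algebra.
From mathcomp Require Import all_classical all_reals exp.
From mathcomp Require Import zify ring lra.
Import Order.TTheory GRing.Theory Num.Theory.
Local Open Scope ring_scope.

Section Gen.
Variables (R : realType) (n : nat) (ls : R) (l0 : 'I_n -> R) (lam : 'I_n -> 'I_n -> R).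
Variables (Q : {set 'I_n} -> Prop) (B : {set 'I_n} -> R).
Hypothesis Hden : forall S, Q S -> 0 < \sum_(j in S) l0 j.
Hypothesis HQ : forall S i, Q S -> i \in nbr lam S -> Q (i |: S).
Hypothesis Hloc : forall S, Q S ->
  ls + \sum_(i in nbr lam S) rate_into lam S i * B (i |: S)
  <= B S * (\sum_(j in S) l0 j + \sum_(i in nbr lam S) rate_into lam S i).

Lemma nbrT : nbr lam [set: 'I_n] = finset.set0.
Proof. by apply/setP => i; rewrite !inE. Qed.

Lemma age_fuel_le k : forall S, Q S -> (n - #|S|)%N = k -> age_fuel ls l0 lam k S <= B S.
Proof.
elim: k => [|k IH] S QS Hk /=.
  have ST : S = [set: 'I_n].
    apply/eqP; rewrite eqEcard finset.subsetT cardsT card_ord; lia.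
  have := Hloc _ QS; rewrite ST nbrT !big_set0 !addr0 => H.
  by rewrite ler_pdivrMr // -ST; apply: Hden.
have Hd : 0 < \sum_(j in S) l0 j + \sum_(i in nbr lam S) rate_into lam S i.
  apply: ltr_wpDr; last exact: Hden.
  by apply: sumr_ge0 => i; rewrite inE => /andP[_ /ltW].
rewrite ler_pdivrMr //; apply: le_trans (Hloc _ QS).
rewrite lerD2l; apply: ler_sum => i Hi.
have Hr : 0 <= rate_into lam S i by move: Hi; rewrite inE => /andP[_ /ltW].
apply: ler_wpM2l => //; apply: IH; first exact: HQ _ _ QS Hi.
move: Hi; rewrite inE => /andP[Hi _]; rewrite cardsU1 Hi /=. by rewrite add1n subnS Hk.
Qed.

Lemma age_le S : Q S -> age ls l0 lam S <= B S.
Proof. by move=> QS; apply: age_fuel_le. Qed.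
End Gen.

Lemma sum_unif (R : realType) (n : nat) (l : R) (S : {set 'I_n}) :
  \sum_(j in S) unif_l0 l j = #|S|%:R * (l / n%:R).
Proof. by rewrite /unif_l0 sumr_const mulr_natl. Qed.

Lemma card_le_n {n : nat} (T : {set 'I_n}) : (#|T| <= n)%N.
Proof. by have := max_card (mem T); rewrite card_ord. Qed.

Section Crude.
Variables (R : realType) (n : nat) (ls l : R) (lam : 'I_n -> 'I_n -> R).
Hypotheses (Hls : 0 < ls) (Hl : 0 < l).

Definition B1 (S : {set 'I_n}) : R := ls * n%:R / (l * #|S|%:R).

Lemma crude (S : {set 'I_n}) : (0 < #|S|)%N -> age ls (unif_l0 l) lam S <= B1 S.
Proof.
move=> HS; apply: (@age_le R n ls (unif_l0 l) lam (fun S => (0 < #|S|)%N) B1) => //.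
- move=> T HT; have {}HT : (0 < #|T|)%N := HT; rewrite sum_unif; apply: mulr_gt0; first by rewrite ltr0n.
  apply: divr_gt0 => //; rewrite ltr0n; have := card_le_n T; lia.
- by move=> T i HT _; rewrite cardsU1; lia.
move=> T HT; have {}HT : (0 < #|T|)%N := HT.
have Hn : (0 < n)%N by have := card_le_n T; lia.
have HB : B1 T * \sum_(j in T) unif_l0 l j = ls.
  rewrite sum_unif /B1; field.
  by rewrite !pnatr_eq0 -!lt0n Hn HT gt_eqF.
rewrite mulrDr HB lerD2l mulr_sumr; apply: ler_sum => i Hi.
have Hr : 0 <= rate_into lam T i by move: Hi; rewrite inE => /andP[_ /ltW].
rewrite mulrC; apply: ler_wpM2r => //.
rewrite /B1 ler_pdivrMr; last by apply: mulr_gt0 => //; rewrite ltr0n cardsU1; lia.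
rewrite mulrAC ler_pdivlMr; last by apply: mulr_gt0 => //; rewrite ltr0n.
apply: ler_wpM2l; first by apply: mulr_ge0; apply: ltW => //; rewrite ltr0n.
rewrite ler_pM2l // ler_nat cardsU1; lia.
Qed.
End Crude.

Definition Hs (R : realType) (k : nat) : R := \sum_(1 <= j < k.+1) (j%:R)^-1.

Section Clique.
Variables (R : realType) (n k : nat) (ls l : R) (lam : 'I_n -> 'I_n -> R).
Hypotheses (Hls : 0 < ls) (Hl : 0 < l) (Hkn : (k <= n)%N).
Hypothesis Hlam0 : forall i j, 0 <= lam i j.
Hypothesis HlamK : forall i j : 'I_n, i != j -> (i < k)%N -> (j < k)%N -> lam i j = l / n%:R.

Definition alpha : R := ls * n%:R / l.
Definition dd (j : nat) : R := alpha / (j%:R * (k.+1 - j)%:R).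
Definition FF (m : nat) : R := \sum_(m <= j < k.+1) dd j.
Definition KK : {set 'I_n} := [set i : 'I_n | (i < k)%N].
Definition B2 (S : {set 'I_n}) : R := FF #|S :&: KK|.

Lemma cardK : #|KK| = k.
Proof.
rewrite cardsE -sum1_card.
rewrite (eq_bigl (fun i : 'I_n => (i < k)%N)); last by move=> i.
by rewrite (big_ord_narrow (F := fun _ => 1%N) Hkn) sum1_card card_ord.
Qed.

Lemma dd_ge0 j : 0 <= dd j.
Proof.
rewrite /dd /alpha; apply: divr_ge0; [apply: divr_ge0; [apply: mulr_ge0 | ] | apply: mulr_ge0];
  by rewrite ?ler0n ?(ltW Hls) ?(ltW Hl).
Qed.

Lemma FF_ge0 m : 0 <= FF m.
Proof. by apply: sumr_ge0 => j _; apply: dd_ge0. Qed.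

Lemma FF_step m : (m <= k)%N -> FF m = dd m + FF m.+1.
Proof. by move=> hm; rewrite /FF big_ltn. Qed.

Lemma clique (S : {set 'I_n}) : (0 < #|S :&: KK|)%N -> age ls (unif_l0 l) lam S <= B2 S.
Proof.
move=> HS; apply: (@age_le R n ls (unif_l0 l) lam (fun S => (0 < #|S :&: KK|)%N) B2) => //.
- move=> T HT; have {}HT : (0 < #|T :&: KK|)%N := HT.
  have h1 : (#|T :&: KK| <= #|T|)%N by apply: subset_leq_card; apply: subsetIl.
  rewrite sum_unif; apply: mulr_gt0; first by rewrite ltr0n; lia.
  apply: divr_gt0 => //; rewrite ltr0n; have := card_le_n T; lia.
- move=> T i HT _; have {}HT : (0 < #|T :&: KK|)%N := HT.
  have : (#|T :&: KK| <= #|(i |: T) :&: KK|)%N.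
    by apply: subset_leq_card; apply: finset.setSI; apply: finset.subsetUr.
  by move=> h; apply: (leq_trans HT h).
move=> S' HS'; have {}HS' : (0 < #|S' :&: KK|)%N := HS'.
set m := #|S' :&: KK|.
set D := KK :\: S'.
set u := l / n%:R.
have hmk : (m <= k)%N by rewrite -cardK; apply: subset_leq_card; apply: subsetIr.
have hmS : (m <= #|S'|)%N by apply: subset_leq_card; apply: subsetIl.
have Hn : (0 < n)%N by lia.
have Hu : 0 < u by apply: divr_gt0 => //; rewrite ltr0n.
have hcD : #|D| = (k - m)%N by rewrite /D cardsD cardK finset.setIC.
have hD : forall i, i \in D -> m%:R * u <= rate_into lam S' i.
  move=> i; rewrite !inE => /andP[hiS hiK].
  rewrite /rate_into (big_setID KK) /=.
  apply: ler_wpDr; first by apply: sumr_ge0 => j _; apply: Hlam0.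
  rewrite (eq_bigr (fun _ => u)); first by rewrite sumr_const mulr_natl.
  move=> j; rewrite !inE => /andP[hjS hjK]; apply: HlamK => //.
  by apply/negP => /eqP E; move: hiS; rewrite E hjS.
have hN : forall i, (i \in nbr lam S') && (i \in KK) = (i \in D).
  move=> i; rewrite /D !inE; apply/idP/idP.
    by case/andP => /andP[-> _] ->.
  case/andP => hiS hiK; rewrite hiS hiK /= andbT.
  apply: lt_le_trans (hD i _); last by rewrite /D !inE hiS hiK.
  by apply: mulr_gt0 => //; rewrite ltr0n.
have hBin : forall i, i \in D -> B2 (i |: S') = FF m - dd m.
  move=> i; rewrite !inE => /andP[hiS hiK]; rewrite /B2.
  have -> : (i |: S') :&: KK = i |: (S' :&: KK).
    by apply/setP => x; rewrite !inE; case: eqP => // ->; rewrite hiK.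
  rewrite cardsU1 (_ : i \notin S' :&: KK); last by rewrite inE (negbTE hiS).
  rewrite add1n -/m (FF_step _ hmk); ring.
have hBout : forall i, i \notin KK -> B2 (i |: S') = FF m.
  move=> i; rewrite inE => hiK; rewrite /B2.
  have -> : (i |: S') :&: KK = S' :&: KK.
    by apply/setP => x; rewrite !inE; case: eqP => [->|] //; rewrite (negbTE hiK) !andbF.
  by [].
rewrite sum_unif (bigID (fun i => i \in KK)) /= [X in _ <= _ * (_ + X)](bigID (fun i => i \in KK)) /=.
rewrite (eq_bigl (fun i => i \in D)) //.
rewrite [X in _ <= _ * (_ + (X + _))](eq_bigl (fun i => i \in D)) //.
rewrite (eq_bigr (fun i => rate_into lam S' i * (FF m - dd m))); last first.
  by move=> i hi; rewrite hBin.
rewrite [X in _ + (_ + X) <= _](eq_bigr (fun i => rate_into lam S' i * FF m)); last first.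
  by move=> i /andP[_ hi]; rewrite hBout.
rewrite -!mulr_suml.
set X := \sum_(i in D) _.
set Y := \sum_(i in nbr lam S' | _) _.
rewrite /B2 -/m.
have hX : (k - m)%:R * (m%:R * u) <= X.
  by rewrite -hcD mulr_natl -sumr_const; apply: ler_sum.
have hF : dd m <= FF m by rewrite (FF_step _ hmk) lerDl FF_ge0.
have hd0 := dd_ge0 m.
have hm0 : 0 < m%:R :> R by rewrite ltr0n.
have hE : dd m * (m%:R * ((k - m)%:R + 1)) = alpha.
  have e : (k.+1 - m)%:R = (k - m)%:R + 1 :> R by rewrite subSn // -addn1 natrD.
  rewrite /dd -e divfK // -natrM pnatr_eq0 muln_eq0 negb_or; apply/andP; split; apply/eqP; lia.
have hls : ls = alpha * u.
  rewrite /alpha /u; field; rewrite pnatr_eq0 -lt0n Hn /=; exact: lt0r_neq0.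
have hSm : m%:R * u <= #|S'|%:R * u by rewrite ler_pM2r // ler_nat.
suff : ls <= FF m * (#|S'|%:R * u) + dd m * X.
  move=> h; have -> : X * (FF m - dd m) + Y * FF m = FF m * X + FF m * Y - dd m * X by ring.
  rewrite -/u !mulrDr; lra.
rewrite hls -hE.
have h1 : dd m * (m%:R * u) <= FF m * (#|S'|%:R * u).
  apply: ler_pM => //; first by apply: mulr_ge0; [apply: ler0n | apply: ltW].
have h2 : dd m * ((k - m)%:R * (m%:R * u)) <= dd m * X by apply: ler_wpM2l.
nra.
Qed.

Lemma FF1_bound : k%:R * FF 1 <= 2 * alpha * Hs R k.
Proof.
have e : FF 1 = alpha / k.+1%:R * (Hs R k + Hs R k).
  rewrite /FF /Hs.
  transitivity (\sum_(1 <= j < k.+1) alpha / k.+1%:R * ((j%:R)^-1 + ((k.+1 - j)%:R)^-1)).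
    apply: eq_big_nat => j /andP[h1 h2]; rewrite /dd natrB; last by lia.
    have hj : j%:R <= k%:R :> R by rewrite ler_nat; lia.
    have hj1 : 1 <= j%:R :> R by rewrite ler1n.
    have hk0 : 0 <= k%:R :> R by rewrite ler0n.
    field; rewrite !gt_eqF //; lra.
  rewrite -mulr_sumr big_split /=; congr (_ * (_ + _)).
  rewrite big_nat_rev; apply: eq_big_nat => j /andP[h1 h2]; congr (_^-1); congr (_%:R); lia.
have ha : 0 <= alpha by rewrite /alpha; apply: divr_ge0; [apply: mulr_ge0 | ]; rewrite ?ler0n ?(ltW Hls) ?(ltW Hl).
have hH : 0 <= Hs R k by apply: sumr_ge0 => j _; rewrite invr_ge0 ler0n.
have hk : k%:R / k.+1%:R <= 1 :> R by rewrite ler_pdivrMr ?ltr0n // mul1r ler_nat.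
have h2 : 0 <= alpha * (Hs R k + Hs R k) by apply: mulr_ge0 => //; apply: addr_ge0.
rewrite e.
have -> : k%:R * (alpha / k.+1%:R * (Hs R k + Hs R k)) = (k%:R / k.+1%:R) * (alpha * (Hs R k + Hs R k)) by ring.
have -> : 2 * alpha * Hs R k = 1 * (alpha * (Hs R k + Hs R k)) by ring.
exact: ler_wpM2r.
Qed.
End Clique.

Lemma inv_le_lnD (R : realType) (k : nat) : (0 < k)%N ->
  (k.+1%:R)^-1 <= ln (k.+1%:R : R) - ln (k%:R).
Proof.
move=> hk.
have hk0 : 0 < k%:R :> R by rewrite ltr0n.
have hk1 : 0 < k.+1%:R :> R by rewrite ltr0n.
have h := @le_ln1Dx R (- (k.+1%:R)^-1).
have hx : -1 < - (k.+1%:R : R)^-1.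
  rewrite ltrN2 invf_lt1 // ltr1n; lia.
have e : 1 + - (k.+1%:R : R)^-1 = k%:R / k.+1%:R.
  rewrite -natr1; field; rewrite gt_eqF //; rewrite natr1 //.
move: (h hx); rewrite e ln_div ?posrE //; set t := (k.+1%:R)^-1; set a := ln _; set b := ln _; lra.
Qed.

Lemma Hs_le (R : realType) (k : nat) : (0 < k)%N -> Hs R k <= 1 + ln (k%:R : R).
Proof.
elim: k => [//|k IH] _.
case: (posnP k) => [->|hk].
  by rewrite /Hs big_nat1 ln1 invr1 addr0.
have := IH hk; have := @inv_le_lnD R k hk.
rewrite /Hs => h1 h2; rewrite big_nat_recr //=; move: h1 h2; set s := \sum_(_ <= _ < _) _; set t := _^-1; set a := ln _; set b := ln _; lra.
Qed.

Lemma greedy_k_le n nbar : (greedy_k n nbar <= n)%N.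
Proof. by rewrite /greedy_k; apply/bigmax_leqP => i _; rewrite -ltnS; exact: ltn_ord. Qed.

Lemma greedy_k_max n nbar : (greedy_k n nbar < n)%N -> (nbar < 'C((greedy_k n nbar).+1, 2))%N.
Proof.
move=> h; rewrite ltnNge; apply/negP => hc.
have h' : ((greedy_k n nbar).+1 < n.+1)%N by [].
have := @leq_bigmax_cond _ (fun k : 'I_n.+1 => ('C(k, 2) <= nbar)%N) (fun k => nat_of_ord k) (Ordinal h') hc.
rewrite -/(greedy_k n nbar) /=; lia.
Qed.

Lemma greedy_link_K n nbar (i j : 'I_n) : i != j -> (i < greedy_k n nbar)%N -> (j < greedy_k n nbar)%N ->
  greedy_link n nbar i j.
Proof.
move=> hij hi hj; have hij' : (i : nat) <> j by by move=> E; move/eqP: hij; apply; apply: val_inj.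
rewrite /greedy_link; apply/andP; split; first lia.
apply/orP; left; lia.
Qed.

Lemma bin2_mul m : (2 * 'C(m, 2) = m * m.-1)%N.
Proof.
elim: m => [//|m IH]; rewrite binS bin1 mulnDr IH; case: m {IH} => [//|m] /=; nia.
Qed.

Lemma aux_lia (cn t ck m k1 k : nat) : (t <= cn)%N -> (cn - t < ck)%N -> (2 * cn = m * m.-1)%N ->
  (2 * ck = k1 * k)%N -> (m * m.-1 < k1 * k + 2 * t)%N.
Proof. lia. Qed.

Lemma aux_nia (X k t : nat) : ((X + k).+1 * (X + k) < k.+1 * k + 2 * t)%N -> (X * (X + k).+1 < 2 * t)%N.
Proof. nia. Qed.

Lemma final_arith (R : realType) (a x y ni nn al c0 L C : R) :
  0 <= ni -> x <= 2 * al * (1 + L) -> al * y <= al * (1 + 2 * C * L) -> 3 <= a * L ->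
  ni * nn = 1 -> al = c0 * nn -> 0 < c0 -> 0 <= L -> 0 < C ->
  ni * (x + al * y) <= c0 * (a + 2 + 2 * C) * L.
Proof.
move=> h0 e1 e2 e3 hnn hal hc0 hL0 HC.
have h1 : x + al * y <= al * (3 + (2 + 2 * C) * L).
  have -> : al * (3 + (2 + 2 * C) * L) = 2 * al * (1 + L) + al * (1 + 2 * C * L) by ring.
  move: e1 e2; move: (2 * al * (1 + L)) (al * (1 + 2 * C * L)) (al * y) => p q r; lra.
apply: le_trans (ler_wpM2l h0 h1) _.
rewrite hal.
have -> : ni * (c0 * nn * (3 + (2 + 2 * C) * L)) = (ni * nn) * (c0 * (3 + (2 + 2 * C) * L)) by ring.
rewrite hnn mul1r -mulrA; apply: ler_wpM2l; first exact: ltW.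
have -> : (a + 2 + 2 * C) * L = a * L + (2 + 2 * C) * L by ring.
move: e3; move: (a * L) ((2 + 2 * C) * L) => p q; lra.
Qed.

Theorem lemma5 (R : realType) (ls l C : R) (ntil : nat -> nat) :
  0 < ls -> 0 < l -> 0 < C ->
  (forall n : nat, (2 <= n)%N ->
     (ntil n <= 'C(n, 2))%N /\ (ntil n)%:R <= C * n%:R * ln (n%:R : R)) ->
  exists C' : R, 0 < C' /\
  exists N : nat, forall n : nat, (N <= n)%N ->
    greedy_avg_age ls l n ('C(n, 2) - ntil n) <= C' * ln (n%:R : R).
Proof.
move=> Hls Hl HC Hnt.
have hln2 : 0 < ln (2%:R : R) by apply: ln_gt0; rewrite ltr1n.
set c0 := ls / l.
have hc0 : 0 < c0 by apply: divr_gt0.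
have h3 : 0 < 3 / ln (2%:R : R) by apply: divr_gt0.
exists (c0 * (3 / ln (2%:R : R) + 2 + 2 * C)); split.
  apply: mulr_gt0 => //; move: h3; generalize (3 / ln (2%:R : R)) => a ha; lra.
exists 2%N => n hn.
have [hnt hntC] := Hnt n hn.
set nbar := ('C(n, 2) - ntil n)%N.
set k := greedy_k n nbar.
have hkn : (k <= n)%N := greedy_k_le n nbar.
set lam := unif_lam l (greedy_link n nbar).
have Hlam0 : forall i j, 0 <= lam i j.
  by move=> i j; rewrite /lam /unif_lam; case: ifP => _ //; apply: divr_ge0; [exact: ltW | exact: ler0n].
have HlamK : forall i j : 'I_n, i != j -> (i < k)%N -> (j < k)%N -> lam i j = l / n%:R.
  by move=> i j hij hi hj; rewrite /lam /unif_lam greedy_link_K.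
have hn1 : (0 < n)%N by apply: leq_trans hn.
have hn0 : 0 < n%:R :> R by rewrite ltr0n.
set F1 := FF R n k ls l 1.
set al := alpha R n ls l.
have hK : forall i : 'I_n, (i < k)%N -> age1 ls (unif_l0 l) lam i <= F1.
  move=> i hi.
  have e : [set i] :&: KK n k = [set i].
    by apply/setP => x; rewrite !inE; case: eqP => [->|] //; rewrite hi.
  have := @clique R n k ls l lam Hls Hl hkn Hlam0 HlamK [set i].
  by rewrite /B2 e cards1; apply.
have hA : forall i, age1 ls (unif_l0 l) lam i <= al.
  move=> i; have := @crude R n ls l lam Hls Hl [set i].
  by rewrite /B1 /al /alpha cards1 mulr1; apply.
have hsum : \sum_(i < n) age1 ls (unif_l0 l) lam i <= F1 *+ k + al *+ (n - k).
  have : \sum_(i < n) age1 ls (unif_l0 l) lam i <= \sum_(i < n) (if (i < k)%N then F1 else al).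
    by apply: ler_sum => i _; case: ifP => h; [apply: hK | apply: hA].
  move=> h; apply: (le_trans h).
  rewrite (bigID (fun i : 'I_n => (i < k)%N)) /=.
  rewrite (eq_bigr (fun _ => F1)); last by move=> i ->.
  rewrite [X in _ + X <= _](eq_bigr (fun _ => al)); last by move=> i /negbTE ->.
  rewrite (big_ord_narrow (F := fun _ => F1) hkn) sumr_const card_ord.
  have t : \sum_(i < n) al = \sum_(i < n | (i < k)%N) al + \sum_(i < n | ~~ (i < k)%N) al.
    by rewrite (bigID (fun i : 'I_n => (i < k)%N)) /=.
  rewrite sumr_const card_ord (big_ord_narrow (F := fun _ => al) hkn) sumr_const card_ord in t.
  rewrite mulrnBr // t; set s := \sum_(_ < _ | _) _; set a := al *+ k; lra.
change (n%:R^-1 * \sum_(i < n) age1 ls (unif_l0 l) lam i <= c0 * (3 / ln (2%:R : R) + 2 + 2 * C) * ln (n%:R : R)).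
set L := ln (n%:R : R).
have hL2 : ln (2%:R : R) <= L by rewrite /L ler_ln ?posrE ?ler_nat // ltr0n.
have hL0 : 0 <= L by move: hln2 hL2; generalize (ln (2%:R : R)) => a; lra.
have b1 := @FF1_bound R n k ls l Hls Hl hkn.
have b2 : Hs R k <= 1 + L.
  case: (posnP k) => hk0.
    rewrite hk0 /Hs big_geq //; lra.
  apply: le_trans (@Hs_le R k hk0) _; by rewrite lerD2l /L ler_ln ?posrE ?ltr0n ?ler_nat ?hkn ?hk0 ?hn1.
have hal : al = c0 * n%:R by rewrite /al /alpha /c0; field; exact: lt0r_neq0.
have hal0 : 0 <= al by rewrite hal; apply: mulr_ge0; apply: ltW.
have b3 : (n - k)%:R <= 1 + 2 * C * L.
  case: (ltnP k n) => hk.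
    have hb := @greedy_k_max n nbar hk.
    have e1 := bin2_mul n; have e2 := bin2_mul k.+1.
    have hX : ((n - k.+1) * n < 2 * ntil n)%N.
      rewrite -/k /nbar in hb.
      have h4 := @aux_lia _ _ _ _ _ k hnt hb e1 e2.
      have [X hXn] : exists X, n = (X + k.+1)%N by exists (n - k.+1)%N; rewrite subnK.
      move: h4; rewrite hXn addnK.
      rewrite addnS /=; exact: aux_nia.
    have hXR : (n - k.+1)%:R * n%:R < 2 * C * L * n%:R :> R.
      apply: lt_le_trans (_ : 2 * (ntil n)%:R <= _).
        by rewrite -natrM -(natrM _ 2) ltr_nat.
      have -> : 2 * C * L * n%:R = 2 * (C * n%:R * L) by ring.
      by apply: ler_wpM2l => //; rewrite -/L in hntC.
    rewrite ltr_pM2r // in hXR.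
    rewrite (_ : (n - k)%N = (n - k.+1) + 1)%N; last by rewrite addn1 subnSK.
    rewrite natrD; move: hXR; set X := (n - k.+1)%:R; lra.
  rewrite (_ : (n - k)%N = 0)%N; last by apply/eqP; rewrite subn_eq0.
  have : 0 <= 2 * C * L by apply: mulr_ge0 => //; apply: mulr_ge0 => //; apply: ltW.
  move: (2 * C * L) => t ht; lra.
have hni : 0 <= (n%:R : R)^-1 by rewrite invr_ge0 ltW.
apply: le_trans (ler_wpM2l hni hsum) _.
rewrite -[F1 *+ k]mulr_natr -[al *+ (n - k)]mulr_natr.
have e1 : F1 * k%:R <= 2 * al * (1 + L).
  rewrite mulrC; apply: le_trans b1 _; apply: ler_wpM2l => //; apply: mulr_ge0 => //.
have e2 : al * (n - k)%:R <= al * (1 + 2 * C * L) by apply: ler_wpM2l.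
have e3 : 3 <= 3 / ln (2%:R : R) * L.
  rewrite mulrAC ler_pdivlMr //; move: hL2; generalize (ln (2%:R : R)) => a; lra.
have hnn : (n%:R : R)^-1 * n%:R = 1 by rewrite mulVf // lt0r_neq0.
exact: final_arith hni e1 e2 e3 hnn hal hc0 hL0 HC.
Qed.
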